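(* Suppose every request of the input $\sigma$ is a triggering request with respect to ALG run on $\sigma$. For each $k\in[m]$ let $x_k$ be the position of $e_k$ in ALG's list at time $q_k$ just before ALG acts at that time. Then $$ALG(\sigma)\le 3\sum_{k=1}^m x_k.$$
   Context: List Update with Time Windows. A set $\mathbb{E}$ of $n$ elements is kept in an ordered list (position $1$ is the head). An input $\sigma$ is a sequence of requests $r_1,\dots,r_m$; request $r_k$ specifies an element $e_k\in\mathbb{E}$, an arrival time $a_k$ and a deadline $q_k\ge a_k$. An algorithm may perform an access up to position $i$ at cost $i$, serving every pending request whose element currently lies in positions $1,\dots,i$, and may swap adjacent elements at cost $1$; actions are instantaneous; every request must be served within $[a_k,q_k]$. Cost = total access cost + number of swaps. Algorithm ALG: whenever the current time equals the deadline of at least one pending request, let the triggering element be the element at the largest current position among those elements having a pending request whose deadline is the current time, and let $i$ be its position. ALG accesses the first $\min(2i-1,n)$ positions and then moves the triggering element to the front by $i-1$ adjacent swaps. At each such event the triggering request is one (arbitrarily fixed) pending request for the triggering element whose deadline is the current time. A request of $\sigma$ is a triggering request if it is the triggering request of some event of ALG on $\sigma$. *)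

(* Defs.v *)
From mathcomp Require Import all_boot all_order.
Set Implicit Arguments. Unset Strict Implicit. Unset Printing Implicit Defensive.
Import Order.TTheory.

(* Conventions:
   - elements are 'I_n; a list is a seq 'I_n (a permutation of enum 'I_n);
   - positions are 1-based: pos x L = index x L + 1;
   - requests are indexed by 'I_m: request k has element e k, arrival a k,
     deadline q k; times live in an arbitrary totally ordered type T
     (e.g. the reals). *)

Definition pos (n : nat) (x : 'I_n) (L : seq 'I_n) : nat := (index x L).+1.

(* Move the element at (1-based) position i to the front, keeping the
   relative order of the others (= the effect of i-1 adjacent swaps). *)
Definition move_to_front (n : nat) (i : nat) (L : seq 'I_n) : seq 'I_n :=
  rotr 1 (take i L) ++ drop i L.

Section ALG.
Variables (d : Order.disp_t) (T : orderType d) (n m : nat).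
Variables (e : 'I_m -> 'I_n) (a q : 'I_m -> T) (L0 : seq 'I_n).

Local Open Scope order_scope.

(* ALG state: current list, set of already served requests, cost so far. *)
Definition state := (seq 'I_n * {set 'I_m} * nat)%type.

Definition due (t : T) (st : state) : {set 'I_m} :=
  [set k | (a k <= t) && (k \notin st.1.2) && (q k == t)].

Definition trig_pos (t : T) (st : state) : nat :=
  (\max_(k in due t st) pos (e k) st.1.1)%N.

Definition step (t : T) (st : state) : state :=
  let: (L, Srv, c) := st in
  if due t st == set0 then st else
  let i := trig_pos t st in
  let j := minn (2 * i).-1 n in
  let served := [set k | (a k <= t) && (pos (e k) L <= j)] in
  (move_to_front i L, Srv :|: served, (c + j + i.-1)%N).

(* the (distinct) deadlines in increasing order: the only times ALG may act *)
Definition event_times : seq T := sort <=%O (undup [seq q k | k <- enum 'I_m]).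

Definition init_state : state := (L0, set0, 0%N).

Definition state_before (t : T) : state :=
  foldl (fun st t' => step t' st) init_state [seq t' <- event_times | t' < t].

Definition alg_cost : nat :=
  (foldl (fun st t' => step t' st) init_state event_times).2.

Definition is_event (t : T) : Prop :=
  t \in event_times /\ due t (state_before t) != set0.

Definition trig_candidate (t : T) (k : 'I_m) : Prop :=
  k \in due t (state_before t) /\
  pos (e k) (state_before t).1.1 = trig_pos t (state_before t).

Definition valid_choice (tr : T -> nat) : Prop :=
  forall t, is_event t -> exists k : 'I_m, tr t = val k /\ trig_candidate t k.

Definition is_triggering (tr : T -> nat) (k : 'I_m) : Prop :=
  exists t, is_event t /\ tr t = val k.

Definition xpos (k : 'I_m) : nat := pos (e k) (state_before (q k)).1.1.

End ALG.

(* Main.v *)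
Require Import Defs.
From mathcomp Require Import all_boot all_order.
From mathcomp Require Import zify.
Import Order.TTheory.

Lemma filter_lt_prefix (d : Order.disp_t) (T : orderType d) (t : T) s1 s2 :
  sorted <%O (s1 ++ t :: s2) -> [seq t' <- s1 ++ t :: s2 | (t' < t)%O] = s1.
Proof.
elim: s1 => [|x s1 IH] /=.
   rewrite lt_path_sortedE => /andP[Hall' _].
  rewrite ltxx -[RHS](filter_pred0 s2); apply: eq_in_filter => y /(allP Hall') /= ty.
  exact: lt_gtF.
move=> H; move: (H); rewrite lt_path_sortedE => /andP[Hall Hs].
have -> : (x < t)%O by apply: (allP Hall); rewrite mem_cat mem_head orbT.
by rewrite IH.
Qed.

Theorem mainTheorem5 (d : Order.disp_t) (T : orderType d) (n m : nat)
  (e : 'I_m -> 'I_n) (a q : 'I_m -> T) (L0 : seq 'I_n) (tr : T -> nat) :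
  perm_eq L0 (enum 'I_n) ->
  (forall k, (a k <= q k)%O) ->
  valid_choice e a q L0 tr ->
  (forall k, is_triggering e a q L0 tr k) ->
  alg_cost e a q L0 <= 3 * \sum_(k < m) xpos e a q L0 k.
Proof.
move=> _ _ Hvc _.
set ET := event_times q.
have sET : sorted <%O ET by rewrite /ET /event_times sort_lt_sorted undup_uniq.
have uET : uniq ET by apply: (sorted_uniq lt_trans ltxx).
pose x := xpos e a q L0.
pose F s := foldl (fun st t' => step e a q t' st) (init_state m L0) s.
have split_sum : forall s t, t \notin s ->
   \sum_(k < m | q k \in rcons s t) x k =
   \sum_(k < m | q k \in s) x k + \sum_(k < m | q k == t) x k.
  move=> s t tn; rewrite big_mkcond [in RHS]big_mkcond [X in _ + X]big_mkcond -big_split.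
  apply: eq_bigr => k _; rewrite mem_rcons in_cons.
  case: eqP => [->|_] /=; first by rewrite (negbTE tn).
  by case: (q k \in s); rewrite ?addn0.
have key : forall s1 s2, ET = s1 ++ s2 -> (F s1).2 <= 3 * \sum_(k < m | q k \in s1) x k.
  elim/last_ind => [|s t IH] s2 Hs; first by [].
  have Hs' : ET = s ++ t :: s2 by rewrite Hs cat_rcons.
  have IH' := IH _ Hs'.
  have Hsb : state_before e a q L0 t = F s.
    by rewrite /state_before -/ET Hs' filter_lt_prefix // -Hs'.
  have tn : t \notin s.
    by move: uET; rewrite Hs' cat_uniq => /and3P[_ /norP[/negP ? _] _]; apply/negP.
  have tin : t \in ET by rewrite Hs' mem_cat mem_head orbT.
  rewrite /F foldl_rcons -/(F s) split_sum // mulnDr.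
  move: IH'; rewrite -Hsb.
  case Est: (state_before e a q L0 t) => [[L Srv] c] /= IH'.
  case: ifP => [_|Hne]; first by apply: leq_trans IH' (leq_addr _ _).
  have Hev : is_event e a q L0 t by split => //; rewrite Est Hne.
  have [k [_ [Hkdue Hkpos]]] := Hvc t Hev.
  rewrite Est in Hkdue Hkpos.
  move: Hkdue; rewrite inE => /andP[_ /eqP qk].
  have xk : x k = trig_pos e a q t (L, Srv, c).
    by rewrite /x /xpos qk Est -Hkpos.
  have : x k <= \sum_(k0 < m | q k0 == t) x k0.
    by rewrite (bigD1 k) ?qk ?eqxx //= leq_addr.
  rewrite xk /=; set i := trig_pos _ _ _ _ _; lia.
rewrite /alg_cost -/ET.
apply: leq_trans (key ET [::] (esym (cats0 _))) _.
by rewrite leq_mul2l big_mkcond leq_sum // => k _; case: ifP.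
Qed.
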